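(* Let $\mathcal V=\mathbb R^{d_v}$, $d(v,\hat v)=\|v-\hat v\|_2^2$, $\ell(v)=\max_{k\in[K]}(a_k^\top v+b_k)$ with $a_k\in\mathbb R^{d_v}$, $b_k\in\mathbb R$, $\hat\mu=\frac1n\sum_{i=1}^n\delta_{\hat v_i}$, $r\ge0$, $\theta_1,\theta_2>0$, and $\ell_\lambda(\hat v)=\sup_{v\in\mathcal V}\{\ell(v)-\lambda d(v,\hat v)\}$. Then the optimal value of $$\min_{\lambda\in\mathbb R_+}\ \lambda r+\lambda\theta_2\log\Big(\frac1n\sum_{i=1}^n\exp\Big(\frac{\ell_{\lambda\theta_1}(\hat v_i)}{\lambda\theta_2}\Big)\Big)$$ equals the optimal value of $$\begin{array}{lll}\min & \lambda r+t\\ \text{s.t.} & \lambda\in\mathbb R_+,\ t\in\mathbb R,\ \eta\in\mathbb R^n_+,\ p\in\mathbb R^n\\ & (\eta_i,\lambda\theta_2,p_i-t)\in\mathcal K_{\exp} & \forall i\in[n]\\ & a_k^\top\hat v_i+b_k+\frac{\|a_k\|_2^2}{4\lambda\theta_1}\le p_i & \forall k\in[K],\ i\in[n]\\ & \frac1n\sum_{i=1}^n\eta_i\le\lambda\theta_2.\end{array}$$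
   Context: $[n]=\{1,\dots,n\}$. The exponential cone is $\mathcal K_{\exp}=\{(x_1,x_2,x_3)\in\mathbb R^3:x_1\ge x_2\exp(x_3/x_2),\ x_2>0\}\cup\{(x_1,0,x_3):x_1\ge0,\ x_3\le0\}$. *)

(* Defs.v *)
From HB Require Import structures.
From mathcomp Require Import all_boot all_order all_algebra.
From mathcomp Require Import all_classical all_reals all_analysis.
Set Implicit Arguments. Unset Strict Implicit. Unset Printing Implicit Defensive.
Import Order.TTheory GRing.Theory Num.Theory.
Local Open Scope ring_scope.
Local Open Scope classical_set_scope.

Section Defs.
Variable R : realType.

Definition Kexp (x1 x2 x3 : R) : Prop :=
  (0 < x2 /\ x2 * expR (x3 / x2) <= x1) \/ (x2 = 0 /\ 0 <= x1 /\ x3 <= 0).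

Definition dotv (dv : nat) (u v : 'rV[R]_dv) : R := \sum_j u ord0 j * v ord0 j.
Definition sqdist (dv : nat) (v w : 'rV[R]_dv) : R := dotv (v - w) (v - w).

(** Piecewise-affine loss l(v) = max_k (a_k^T v + b_k) (extended-real valued;
    finite as soon as K >= 1). *)
Definition ell (dv K : nat) (a : 'I_K -> 'rV[R]_dv) (b : 'I_K -> R)
    (v : 'rV[R]_dv) : \bar R :=
  \big[Order.max/-oo%E]_(k < K) ((dotv (a k) v + b k)%:E).

Definition ell_lam (dv K : nat) (a : 'I_K -> 'rV[R]_dv) (b : 'I_K -> R)
    (lam : R) (vh : 'rV[R]_dv) : \bar R :=
  ereal_sup [set (ell a b v - (lam * sqdist v vh)%:E)%E | v in [set: 'rV[R]_dv]].

(** For lam > 0 the values l_{lam th1}(vh_i)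
    are finite (quadratic penalty), so [fine] is harmless.  At lam = 0 we use
    the standard closure (perspective) convention:
    0 * th2 * log((1/n) sum exp(x_i/0)) := max_i x_i (possibly +oo). *)
Definition obj1 (dv K n : nat) (a : 'I_K -> 'rV[R]_dv) (b : 'I_K -> R)
    (vh : 'I_n -> 'rV[R]_dv) (r th1 th2 lam : R) : \bar R :=
  if 0 < lam then
    (lam * r + lam * th2 *
       ln (n%:R^-1 * \sum_(i < n)
             expR (fine (ell_lam a b (lam * th1) (vh i)) / (lam * th2))))%:E
  else \big[Order.max/-oo%E]_(i < n) ell_lam a b 0 (vh i).

(** ||a||^2 / (4 lam th1), with the perspective convention at lam = 0:
    0 if a = 0 and +oo otherwise. *)
Definition persp (dv : nat) (a : 'rV[R]_dv) (lam th1 : R) : \bar R :=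
  if 0 < lam then (dotv a a / (4 * lam * th1))%:E
  else if a == 0 then 0%E else +oo%E.

Definition feas2 (dv K n : nat) (a : 'I_K -> 'rV[R]_dv) (b : 'I_K -> R)
    (vh : 'I_n -> 'rV[R]_dv) (th1 th2 : R)
    (lam t : R) (eta p : 'I_n -> R) : Prop :=
  [/\ 0 <= lam,
      (forall i, 0 <= eta i),
      (forall i, Kexp (eta i) (lam * th2) (p i - t)),
      (forall k i, ((dotv (a k) (vh i) + b k)%:E + persp (a k) lam th1 <= (p i)%:E)%E)
    & n%:R^-1 * \sum_(i < n) eta i <= lam * th2].

End Defs.

(* Main.v *)
Require Import Defs.
From HB Require Import structures.
From mathcomp Require Import all_boot all_order all_algebra.
From mathcomp Require Import all_classical all_reals all_analysis.
From mathcomp Require Import ring lra.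
Import Order.TTheory GRing.Theory Num.Theory.
Local Open Scope ring_scope.
Local Open Scope classical_set_scope.

Set Implicit Arguments.
Section H.
Variable R : realType.
Variable dv K : nat.
Variables (a : 'I_K -> 'rV[R]_dv) (b : 'I_K -> R).

Definition Fk (mu : R) (k : 'I_K) (vh : 'rV[R]_dv) :=
  dotv (a k) vh + b k + dotv (a k) (a k) / (4 * mu).

Lemma comb (mu : R) (u v vh : 'rV[R]_dv) :
  dotv u v - mu * sqdist v vh =
  \sum_j (u ord0 j * v ord0 j - mu * ((v ord0 j - vh ord0 j) * (v ord0 j - vh ord0 j))).
Proof.
rewrite /sqdist /dotv mulr_sumr -sumrB; apply: eq_bigr => j _.
by rewrite !mxE.
Qed.

Lemma comb2 (mu : R) (u vh : 'rV[R]_dv) :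
  dotv u vh + dotv u u / (4 * mu) =
  \sum_j (u ord0 j * vh ord0 j + u ord0 j * u ord0 j / (4 * mu)).
Proof. by rewrite /dotv mulr_suml -big_split. Qed.

Lemma dot_bound (mu : R) (u v vh : 'rV[R]_dv) : 0 < mu ->
  dotv u v - mu * sqdist v vh <= dotv u vh + dotv u u / (4 * mu).
Proof.
move=> mu0; rewrite comb comb2; apply: ler_sum => j _.
set x := u ord0 j; set y := v ord0 j; set z := vh ord0 j.
rewrite -subr_ge0.
have -> : x * z + x * x / (4 * mu) - (x * y - mu * ((y - z) * (y - z)))
  = (x - 2 * mu * (y - z)) ^+ 2 / (4 * mu).
  by field; rewrite ?mulf_neq0 // ?gt_eqF // ?mulr_gt0.
by rewrite divr_ge0 ?sqr_ge0 // ltW // mulr_gt0.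
Qed.

Lemma dot_attain (mu : R) (u vh : 'rV[R]_dv) : 0 < mu ->
  dotv u (vh + (2 * mu)^-1 *: u) - mu * sqdist (vh + (2 * mu)^-1 *: u) vh
  = dotv u vh + dotv u u / (4 * mu).
Proof.
move=> mu0; rewrite comb comb2; apply: eq_bigr => j _; rewrite !mxE.
by field; rewrite gt_eqF.
Qed.

Lemma ell_ge v k : ((dotv (a k) v + b k)%:E <= ell a b v)%E.
Proof. exact: le_bigmax. Qed.

Lemma ell_le v (q : R) : (forall k, dotv (a k) v + b k <= q) -> (ell a b v <= q%:E)%E.
Proof. by move=> h; apply: bigmax_le => [|k _]; rewrite ?leNye ?lee_fin. Qed.

Lemma ell_lam_le mu vh (q : R) : 0 < mu -> (forall k, Fk mu k vh <= q) ->
  (ell_lam a b mu vh <= q%:E)%E.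
Proof.
move=> mu0 h; apply: ge_ereal_sup => _ [v _ <-].
have : (ell a b v <= (q + mu * sqdist v vh)%:E)%E.
  apply: ell_le => k; have := h k; have := dot_bound mu (a k) v vh mu0.
  rewrite /Fk; lra.
case: (ell a b v) => [x| |] //=; rewrite ?lee_fin.
  by move=> hx; lra.
by move=> _; rewrite addNye leNye. Qed.

Lemma ell_lam_ge mu vh k : 0 < mu -> ((Fk mu k vh)%:E <= ell_lam a b mu vh)%E.
Proof.
move=> mu0; set v := vh + (2 * mu)^-1 *: a k.
apply: le_trans (ereal_sup_ubound _); last by exists v.
apply: le_trans (leeB (ell_ge v k) (lexx (mu * sqdist v vh)%:E)).
rewrite -EFinB lee_fin /Fk.
have := dot_attain mu (a k) vh mu0; rewrite -/v; lra.
Qed.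

Lemma ell_lam_fin mu vh : (0 < K)%N -> 0 < mu ->
  exists p, [/\ ell_lam a b mu vh = p%:E, (forall k, Fk mu k vh <= p) &
     (forall q, (forall k, Fk mu k vh <= q) -> p <= q)].
Proof.
move=> K0 mu0.
have ub : forall k, Fk mu k vh <= \sum_k0 `|Fk mu k0 vh|.
  move=> k; rewrite (bigD1 k) //=; apply: ler_wpDr; first by apply: sumr_ge0.
  exact: ler_norm.
case E: (ell_lam a b mu vh) => [p| |].
- exists p; split => //.
    by move=> k; rewrite -lee_fin -E; apply: ell_lam_ge.
  by move=> q hq; rewrite -lee_fin -E; apply: ell_lam_le.
- by have := ell_lam_le mu vh _ mu0 ub; rewrite E.
- by have := ell_lam_ge mu vh (Ordinal K0) mu0; rewrite E.
Qed.

End H.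

Lemma dotvZ (R : realType) (dv : nat) (u v : 'rV[R]_dv) (s : R) :
  dotv u (s *: v) = s * dotv u v.
Proof. by rewrite /dotv mulr_sumr; apply: eq_bigr => j _; rewrite mxE mulrCA. Qed.

Lemma dotv0 (R : realType) (dv : nat) (v : 'rV[R]_dv) : dotv 0 v = 0.
Proof. by rewrite /dotv big1 // => j _; rewrite mxE mul0r. Qed.


Theorem mainTheorem10 (R : realType) (dv K n : nat)
    (a : 'I_K -> 'rV[R]_dv) (b : 'I_K -> R) (vh : 'I_n -> 'rV[R]_dv)
    (r th1 th2 : R) :
  (0 < K)%N -> (0 < n)%N -> 0 <= r -> 0 < th1 -> 0 < th2 ->
  ereal_inf [set obj1 a b vh r th1 th2 lam | lam in [set lam : R | 0 <= lam]]
  = ereal_inf [set x : \bar R | exists lam t (eta p : 'I_n -> R),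
                  feas2 a b vh th1 th2 lam t eta p /\ x = ((lam * r + t)%:E)%E].
Proof.
move=> K0 n0 r0 th10 th20.
have n0R : 0 < (n%:R : R) by rewrite ltr0n.
apply/eqP; rewrite eq_le; apply/andP; split.
- apply: le_ereal_inf_tmp => _ [lam [t [eta [p [[l0 eta0 Kx cst sm] ->]]]]].
  apply: (@le_trans _ _ (obj1 a b vh r th1 th2 lam)).
    by apply: ereal_inf_lbound; exists lam.
  have [lam0|lamn] := ltP 0 lam.
  + rewrite /obj1 lam0 lee_fin lerD2l.
    set c := lam * th2; have c0 : 0 < c by rewrite mulr_gt0.
    have mu0 : 0 < lam * th1 by rewrite mulr_gt0.
    have hP : forall i, fine (ell_lam a b (lam * th1) (vh i)) <= p i.
      move=> i; have [P [E lo up]] := ell_lam_fin _ a b (lam * th1) (vh i) K0 mu0.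
      rewrite E /=; apply: up => k; have := cst k i.
      by rewrite /persp lam0 -EFinD lee_fin /Fk mulrA.
    have hK : forall i, expR (p i / c) <= eta i / c * expR (t / c).
      move=> i; case: (Kx i) => [[_ h]|[h _]]; last by move: c0; rewrite /c h ltxx.
      have -> : p i / c = (p i - t) / c + t / c by rewrite -mulrDl subrK.
      rewrite expRD ler_wpM2r ?expR_ge0 // ler_pdivlMr // mulrC //.
    set S := n%:R^-1 * \sum_(i < n) expR (fine (ell_lam a b (lam * th1) (vh i)) / c).
    have S0 : 0 < S.
      rewrite /S mulr_gt0 ?invr_gt0 // (bigD1 (Ordinal n0)) //=.
      by apply: ltr_wpDr; [apply: sumr_ge0 => i _; apply: expR_ge0| apply: expR_gt0].
    have SE : S <= expR (t / c).
      apply: (@le_trans _ _ (n%:R^-1 * \sum_(i < n) (eta i / c * expR (t / c)))).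
        rewrite /S ler_pM2l ?invr_gt0 //; apply: ler_sum => i _.
        apply: le_trans (hK i); rewrite ler_expR ler_pM2r ?invr_gt0 //.
      rewrite -mulr_suml -mulr_suml mulrA -[X in _ <= X]mul1r ler_pM2r ?expR_gt0 //.
      by rewrite mulrA ler_pdivrMr // mul1r.
    rewrite -ler_pdivlMl // mulrC -[t / c]expRK ler_ln ?posrE ?expR_gt0 //.
  + have l00 : lam = 0 by apply/eqP; rewrite eq_le l0 lamn.
    subst lam.
    have az : forall k, a k = 0.
      move=> k; have := cst k (Ordinal n0); rewrite /persp ltxx.
      by case: eqP => // _; rewrite addey.
    rewrite /obj1 ltxx; apply: bigmax_le => [|i _]; first by rewrite leNye.
    apply: ge_ereal_sup => _ [v _ <-]; rewrite mul0r sube0.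
    apply: ell_le => k; rewrite az dotv0 add0r mul0r add0r.
    have := cst k i; rewrite /persp ltxx az eqxx adde0 dotv0 add0r lee_fin => h1.
    case: (Kx i) => [[]|[_ [_ h2]]]; first by rewrite mul0r ltxx.
    lra.
- apply: le_ereal_inf_tmp => _ [lam l0 <-].
  have [lam0|lamn] := ltP 0 lam.
  + set c := lam * th2; have c0 : 0 < c by rewrite mulr_gt0.
    have mu0 : 0 < lam * th1 by rewrite mulr_gt0.
    set P := fun i => fine (ell_lam a b (lam * th1) (vh i)).
    set S := n%:R^-1 * \sum_(i < n) expR (P i / c).
    have S0 : 0 < S.
      rewrite /S mulr_gt0 ?invr_gt0 // (bigD1 (Ordinal n0)) //=.
      by apply: ltr_wpDr; [apply: sumr_ge0 => i _; apply: expR_ge0| apply: expR_gt0].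
    set t := c * ln S.
    set eta := fun i => c * expR ((P i - t) / c).
    have tc : t / c = ln S by rewrite /t; field; rewrite gt_eqF.
    have et : forall i, eta i = c / S * expR (P i / c).
      move=> i; rewrite /eta mulrBl tc expRD expRN lnK ?posrE //.
    ring.
    apply: ereal_inf_lbound; exists lam, t, eta, P; split; last by rewrite /obj1 lam0.
    split => //.
    * by move=> i; rewrite /eta mulr_ge0 ?expR_ge0 ?ltW.
    * by move=> i; left; split.
    * move=> k i; have [Pi [E lo _]] := ell_lam_fin _ a b (lam * th1) (vh i) K0 mu0.
      rewrite /persp lam0 /P E /= -EFinD lee_fin; have := lo k.
      by rewrite /Fk mulrA.
    * under eq_bigr => i _ do rewrite et.
      rewrite -mulr_sumr mulrCA -/S divfK ?gt_eqF //.
  + have l00 : lam = 0 by apply/eqP; rewrite eq_le l0 lamn.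
    subst lam.
    case: (boolP [forall k, a k == 0]) => [haz|].
    * case: (@arg_maxP _ _ _ (Ordinal K0) xpredT b isT) => k0 _ hk0.
      apply: (@le_trans _ _ (b k0)%:E).
        apply: ereal_inf_lbound; exists 0, (b k0), (fun=> 0), (fun=> b k0).
        split; last by rewrite mul0r add0r.
        split => //.
        - by move=> i; right; rewrite mul0r subrr.
        - move=> k i; rewrite /persp ltxx (eqP (forallP haz k)) eqxx adde0.
          by rewrite dotv0 add0r lee_fin; apply: hk0.
        - by rewrite big1 // mulr0 mul0r.
      rewrite /obj1 ltxx; apply: le_trans (le_bigmax _ _ (Ordinal n0)).
      apply: le_trans (ereal_sup_ubound _); last by exists (vh (Ordinal n0)).
      rewrite mul0r sube0; apply: le_trans (ell_ge _ a b _ k0).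
      by rewrite (eqP (forallP haz k0)) dotv0 add0r.
    * move/forallPn => [k hk].
      have pos : 0 < dotv (a k) (a k).
        rewrite lt_neqAle sumr_ge0 ?andbT => [|j _]; last by rewrite -expr2 sqr_ge0.
        have nn : forall j : 'I_dv, true -> 0 <= a k ord0 j * a k ord0 j by move=> j _; rewrite -expr2 sqr_ge0.
        apply: contra hk => /eqP /esym Hs; have h := psumr_eq0P nn Hs.

        apply/eqP/matrixP => i j; rewrite (ord1 i) mxE.
        by have /eqP := h j isT; rewrite mulf_eq0 orbb => /eqP.
      suff hy : forall y : R, (y%:E <= obj1 a b vh r th1 th2 0)%E.
        move: hy; case: (obj1 a b vh r th1 th2 0) => [x| |] hy.
        - by have := hy (x + 1)%R; rewrite lee_fin => h; exfalso; lra.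
        - by rewrite leey.
        - by have := hy 0.
      move=> y; rewrite /obj1 ltxx; apply: le_trans (le_bigmax _ _ (Ordinal n0)).
      set s := (y - b k) / dotv (a k) (a k).
      apply: le_trans (ereal_sup_ubound _); last by exists (s *: a k).
      rewrite mul0r sube0; apply: le_trans (ell_ge _ a b _ k).
      by rewrite dotvZ /s divfK ?gt_eqF // lee_fin subrK.
Qed.
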